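(* Let $\mathbf{r}\in\mathbb{Q}^n$, let $\le_m$ be a monomial order and let $<_{\mathbf{r},m}$ be the associated term order. Let $T$ be a finite set of terms of $K[\mathbf{X}]$. Then there exists $\mathbf{s}\in\mathbb{Q}^n$ such that for all $t_1,t_2\in T$, $$t_1>_{\mathbf{r},m}t_2 \iff \mathrm{val}_{\mathbf{s}}(t_1)<\mathrm{val}_{\mathbf{s}}(t_2).$$ In particular, if $F$ is a finite set of polynomials in $K[\mathbf{X}]$, every equivalence class of term orders (of the form $<_{\mathbf{r},m}$) with respect to $F$ contains a term order $<_{\mathbf{s},m}$ such that $\mathrm{LT}_{\mathbf{s},m}(f)=\mathrm{init}_{\mathbf{s}}(f)$ for all $f\in F$.
   Context: $K$ is a field complete for a discrete valuation $\mathrm{val}$. A term is $c\mathbf{X}^\alpha$ with $c\in K^\times$, $\alpha\in\mathbb{N}^n$. For $\mathbf{s}\in\mathbb{Q}^n$, the Gauss valuation of a term is $\mathrm{val}_{\mathbf{s}}(c\mathbf{X}^\alpha)=\mathrm{val}(c)-\mathbf{s}\cdot\alpha$, and of a polynomial $f$ it is the minimum over its terms. Given a monomial order $\le_m$, $a\mathbf{X}^\alpha<_{\mathbf{r},m}b\mathbf{X}^\beta$ iff $\mathrm{val}_{\mathbf{r}}(a\mathbf{X}^\alpha)>\mathrm{val}_{\mathbf{r}}(b\mathbf{X}^\beta)$, or they are equal and $\mathbf{X}^\alpha<_m\mathbf{X}^\beta$; $\mathrm{LT}_{\mathbf{r},m}(f)$ is the maximal term of $f$. The initial part $\mathrm{init}_{\mathbf{s}}(f)$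 is the sum of the terms of $f$ whose Gauss valuation $\mathrm{val}_{\mathbf{s}}$ equals $\mathrm{val}_{\mathbf{s}}(f)$. Two term orders $<_1,<_2$ are equivalent with respect to a finite set $F$ if $\{\mathrm{LT}_{<_1}(f):f\in F\}=\{\mathrm{LT}_{<_2}(f):f\in F\}$. *)

(* Defs.v *)
From HB Require Import structures.
From mathcomp Require Import all_boot all_order all_algebra.
From mathcomp Require Import mpoly.
Set Implicit Arguments. Unset Strict Implicit. Unset Printing Implicit Defensive.
Import Order.TTheory GRing.Theory Num.Theory.
Local Open Scope ring_scope.

(* val is only meaningful on K^x; its value at 0 is irrelevant. *)
Definition is_discrete_valuation (K : fieldType) (val : K -> int) : Prop :=
  [/\ (forall x y : K, x != 0 -> y != 0 -> val (x * y) = val x + val y),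
      (forall x y : K, x != 0 -> y != 0 -> x + y != 0 ->
          Num.min (val x) (val y) <= val (x + y)) &
      (exists pi : K, pi != 0 /\ val pi = 1)].

Definition vsmall (K : fieldType) (val : K -> int) (N : int) (x : K) : bool :=
  (x == 0) || (N <= val x).

Definition vcauchy (K : fieldType) (val : K -> int) (u : nat -> K) : Prop :=
  forall N : int, exists M : nat, forall p q : nat, (M <= p)%N -> (M <= q)%N ->
    vsmall val N (u p - u q).

Definition vconverges (K : fieldType) (val : K -> int) (u : nat -> K) (l : K) : Prop :=
  forall N : int, exists M : nat, forall p : nat, (M <= p)%N -> vsmall val N (u p - l).

Definition vcomplete (K : fieldType) (val : K -> int) : Prop :=
  forall u : nat -> K, vcauchy val u -> exists l : K, vconverges val u l.

Definition monomial_order (n : nat) (le : rel 'X_{1..n}) : Prop :=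
  [/\ (forall a, le a a),
      (forall a b, le a b -> le b a -> a = b),
      (forall a b c, le a b -> le b c -> le a c) &
      (forall a b, le a b || le b a)] /\
  (forall a b c, le a b -> le (a + c)%MM (b + c)%MM) /\
  well_founded (fun a b => le a b && (a != b)).

Definition term (K : fieldType) (n : nat) := (K * 'X_{1..n})%type.

Definition is_term (K : fieldType) (n : nat) (t : term K n) : bool := t.1 != 0.

Definition sdot (n : nat) (s : 'rV[rat]_n) (a : 'X_{1..n}) : rat :=
  \sum_(i < n) s 0 i * (a i)%:R.

Definition gval (K : fieldType) (val : K -> int) (n : nat) (s : 'rV[rat]_n)
  (t : term K n) : rat := (val t.1)%:~R - sdot s t.2.

Definition term_lt (K : fieldType) (val : K -> int) (n : nat) (r : 'rV[rat]_n)
  (le : rel 'X_{1..n}) (t1 t2 : term K n) : bool :=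
  (gval val r t1 > gval val r t2) ||
  ((gval val r t1 == gval val r t2) && (le t1.2 t2.2 && (t1.2 != t2.2))).

Definition LT_exp (K : fieldType) (val : K -> int) (n : nat) (r : 'rV[rat]_n)
  (le : rel 'X_{1..n}) (f : {mpoly K[n]}) : option 'X_{1..n} :=
  foldr (fun m acc => match acc with
                      | None => Some m
                      | Some m' => if term_lt val r le (f@_m', m') (f@_m, m)
                                   then Some m else Some m'
                      end) None (msupp f).

(* LT_{r,m}(f), as a polynomial (the term f@_alpha X^alpha); 0 for f = 0 *)
Definition LT (K : fieldType) (val : K -> int) (n : nat) (r : 'rV[rat]_n)
  (le : rel 'X_{1..n}) (f : {mpoly K[n]}) : {mpoly K[n]} :=
  match LT_exp val r le f with
  | None => 0
  | Some m => f@_m *: 'X_[m]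
  end.

Definition init (K : fieldType) (val : K -> int) (n : nat) (s : 'rV[rat]_n)
  (f : {mpoly K[n]}) : {mpoly K[n]} :=
  \sum_(m <- msupp f |
          all (fun m' => gval val s (f@_m, m) <= gval val s (f@_m', m')) (msupp f))
     f@_m *: 'X_[m].

Definition equiv_wrt (K : fieldType) (n : nat)
  (LT1 LT2 : {mpoly K[n]} -> {mpoly K[n]}) (F : seq {mpoly K[n]}) : Prop :=
  [seq LT1 f | f <- F] =i [seq LT2 f | f <- F].

(* Main.v *)
Require Import Defs.
From HB Require Import structures.
From mathcomp Require Import all_boot all_order all_algebra.
From mathcomp Require Import mpoly.
From mathcomp Require Import ring.
From Stdlib Require List.
From Stdlib Require Import FunctionalExtensionality.
Set Implicit Arguments. Unset Strict Implicit. Unset Printing Implicit Defensive.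
Import Order.TTheory GRing.Theory Num.Theory.
Local Open Scope ring_scope.

Definition dotm (m : nat) (w d : nat -> rat) : rat := \sum_(i < m) w i * d i.

Inductive cone (D : seq (nat -> rat)) : (nat -> rat) -> Prop :=
| cone_base d c : List.In d D -> 0 < c -> cone D (fun i => c * d i)
| cone_add x y : cone D x -> cone D y -> cone D (fun i => x i + y i).

Lemma betw (a : rat) Us : (forall u, List.In u Us -> a < u) ->
  exists t, a < t /\ forall u, List.In u Us -> t < u.
Proof.
elim: Us => [|u Us IH] H.
  by exists (a + 1); split => //; rewrite ltrDl.
have [t [at1 tU]] : exists t, a < t /\ forall u, List.In u Us -> t < u.
  by apply: IH => v hv; apply: H; right.
have au : a < u by apply: H; left.
exists (Num.min t ((a + u) / 2)); split.
  rewrite lt_min at1 /=. by rewrite ltr_pdivlMr // mulrDr mulr1 ltrD2l.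
move=> v [<-|hv].
  rewrite gt_min; apply/orP; right. by rewrite ltr_pdivrMr // mulrDr mulr1 ltrD2r.
by rewrite gt_min tU.
Qed.

Lemma below Us : exists t : rat, forall u, List.In u Us -> t < u.
Proof.
elim: Us => [|u Us [t Ht]]; first by exists 0.
exists (Num.min t (u - 1)) => v [<-|hv].
  by rewrite gt_min; apply/orP; right; rewrite gtrBl.
by rewrite gt_min Ht.
Qed.

Lemma sep (Ls Us : seq rat) : (forall l u, List.In l Ls -> List.In u Us -> l < u) ->
  exists t, (forall l, List.In l Ls -> l < t) /\ (forall u, List.In u Us -> t < u).
Proof.
elim: Ls => [|l Ls IH] H.
  by have [t Ht] := below Us; exists t.
have [t' [Lt Ut]] : exists t, (forall l, List.In l Ls -> l < t) /\ (forall u, List.In u Us -> t < u).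
  by apply: IH => l' u hl hu; apply: H => //; right.
have [lt'|] := ltP l t'.
  by exists t'; split => // l' [<-|]; [|apply: Lt].
move=> t'l.
have [t [lt tU]] := betw (H l^~ (or_introl erefl)).
exists t; split => // l' [<-|hl] //.
by apply: lt_le_trans (Lt _ hl) (le_trans t'l (ltW lt)).
Qed.

Lemma dotm_comb m w (a b : rat) p q :
  dotm m w (fun i => a * p i + b * q i) = a * dotm m w p + b * dotm m w q.
Proof.
rewrite /dotm !mulr_sumr -big_split /=; apply: eq_bigr => i _.
by rewrite mulrDr !mulrA ![w i * _]mulrC.
Qed.

Lemma FM m : forall D, (forall x, cone D x -> ~ (forall i, (i < m)%N -> x i = 0)) ->
  exists w, forall d, List.In d D -> 0 < dotm m w d.
Proof.
elim: m => [|m IH] D H.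
  exists (fun _ => 0) => d hd; exfalso.
  by apply: (H _ (cone_base hd (ltr01 : (0:rat) < 1))).
pose Dp := List.filter (fun d : nat -> rat => 0 < d m) D.
pose Dn := List.filter (fun d : nat -> rat => d m < 0) D.
pose Dz := List.filter (fun d : nat -> rat => d m == 0) D.
pose comb (p q : nat -> rat) := fun i => (- q m) * p i + p m * q i.
pose D' := Dz ++ List.flat_map (fun p => List.map (comb p) Dn) Dp.
have HD' : forall x, cone D' x -> cone D x /\ x m = 0.
  move=> x; elim => [d c hd c0|x1 x2 _ [c1 e1] _ [c2 e2]]; last first.
    by split; [apply: cone_add|rewrite e1 e2 addr0].
  move/List.in_app_iff: hd => [/List.filter_In [hd /eqP ->]|].
    by split; [apply: cone_base|rewrite mulr0].
  move/List.in_flat_map => [p [/List.filter_In [hp p0] /List.in_map_iff [q [<- /List.filter_In [hq q0]]]]].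
  split; last by rewrite /comb /= [p m * q m]mulrC mulNr addNr mulr0.
  have -> : (fun i => c * comb p q i) = (fun i => (c * - q m) * p i + (c * p m) * q i).
    by apply: functional_extensionality => i; rewrite /comb mulrDr !mulrA.
  apply: cone_add; apply: cone_base => //; apply: mulr_gt0 => //.
  by rewrite oppr_gt0.
have [w' Hw'] : exists w, forall d, List.In d D' -> 0 < dotm m w d.
  apply: IH => x cx hx; have [cx' xm] := HD' x cx.
  apply: (H x cx') => i; rewrite ltnS leq_eqVlt => /orP [/eqP ->|] //.
  exact: hx.
pose Ls := List.map (fun p => - dotm m w' p / p m) Dp.
pose Us := List.map (fun q => dotm m w' q / (- q m)) Dn.
have [t [Lt Ut]] : exists t, (forall l, List.In l Ls -> l < t) /\ (forall u, List.In u Us -> t < u).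
  apply: sep => l u /List.in_map_iff [p [<- /List.filter_In [hp p0]]]
                 /List.in_map_iff [q [<- /List.filter_In [hq q0]]].
  have q0' : 0 < - q m by rewrite oppr_gt0.
  rewrite ltr_pdivrMr // mulrAC ltr_pdivlMr // mulNr -subr_gt0 opprK.
  have := Hw' (comb p q); rewrite dotm_comb addrC [dotm m w' q * _]mulrC [dotm m w' p * _]mulrC; apply.
  apply/List.in_app_iff; right; apply/List.in_flat_map; exists p; split.
    by apply/List.filter_In.
  by apply/List.in_map_iff; exists q; split => //; apply/List.filter_In.
exists (fun i => if (i < m)%N then w' i else t) => d hd.
have -> : dotm m.+1 (fun i => if (i < m)%N then w' i else t) d = dotm m w' d + t * d m.
  rewrite /dotm big_ord_recr /= ltnn; congr (_ + _).
  by apply: eq_bigr => i _; rewrite ltn_ord.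
case: (ltgtP (d m) 0) => dm.
- have : t < dotm m w' d / - d m.
    by apply: Ut; apply/List.in_map_iff; exists d; split => //; apply/List.filter_In.
  have dm' : 0 < - d m by rewrite oppr_gt0.
  rewrite ltr_pdivlMr // => h; rewrite -subr_gt0 in h.
  by move: h; rewrite mulrN opprK addrC.
- have : - dotm m w' d / d m < t.
    by apply: Lt; apply/List.in_map_iff; exists d; split => //; apply/List.filter_In.
  rewrite ltr_pdivrMr // => h; rewrite -subr_gt0 in h.
  by move: h; rewrite opprK addrC mulrC.
- rewrite dm mulr0 addr0; apply: Hw'.
  by apply/List.in_app_iff; left; apply/List.filter_In; split => //; rewrite dm.
Qed.

Definition mlt (n : nat) (le : rel 'X_{1..n}) a b := le a b && (a != b).

Section MO.
Variables (n : nat) (le : rel 'X_{1..n}).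
Hypothesis hle : monomial_order le.

Lemma mlt_trans a b c : mlt le a b -> mlt le b c -> mlt le a c.
Proof.
case: hle => [[lr la lt lto] [lc _]] /andP [ab nab] /andP [bc nbc].
apply/andP; split; first exact: lt ab bc.
apply/eqP => eac; subst c; by rewrite (la _ _ ab bc) eqxx in nab.
Qed.

Lemma mlt_add a b c : mlt le a b -> mlt le (a + c)%MM (b + c)%MM.
Proof.
case: hle => [[lr la lt lto] [lc _]] /andP [ab nab].
apply/andP; split; first exact: lc.
by apply/eqP => /addIm e; rewrite e eqxx in nab.
Qed.

Lemma mlt_sum a1 b1 a2 b2 : mlt le a1 b1 -> mlt le a2 b2 -> mlt le (a1 + a2)%MM (b1 + b2)%MM.
Proof.
move=> h1 h2; apply: (mlt_trans (mlt_add a2 h1)).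
by rewrite ![(b1 + _)%MM]addmC; apply: mlt_add.
Qed.

Lemma mlt_muln a b k : mlt le a b -> (0 < k)%N -> mlt le (a *+ k)%MM (b *+ k)%MM.
Proof.
move=> h; case: k => // k _; elim: k => [|k IH]; first by rewrite !mulm1n.
by rewrite (mulmS a) (mulmS b); apply: mlt_sum.
Qed.

End MO.

Definition co (n : nat) (a : 'X_{1..n}) (i : nat) : nat :=
  if @insub nat (fun k => (k < n)%N) 'I_n i is Some j then a j else 0%N.

Lemma co_ord n (a : 'X_{1..n}) (j : 'I_n) : co a j = a j.
Proof. by rewrite /co valK. Qed.

Lemma coD n (a b : 'X_{1..n}) i : co (a + b)%MM i = (co a i + co b i)%N.
Proof. by rewrite /co; case: insub => // j; rewrite mnmDE. Qed.

Lemma coM n (a : 'X_{1..n}) k i : co (a *+ k)%MM i = (co a i * k)%N.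
Proof. by rewrite /co; case: insub => // j; rewrite mulmnE. Qed.

Lemma co_ext n (a b : 'X_{1..n}) : (forall i, (i < n)%N -> co a i = co b i) -> a = b.
Proof. move=> h; apply/mnmP => j; by rewrite -!co_ord h. Qed.

Lemma posq (c : rat) : 0 < c -> exists N k : nat, [/\ (0 < N)%N, (0 < k)%N & N%:R * c = k%:R].
Proof.
move=> c0; exists `|denq c|%N, `|numq c|%N.
have nq : 0 < numq c by rewrite numq_gt0.
split; first by rewrite absz_gt0 denq_neq0.
  by rewrite absz_gt0 gt_eqF.
by rewrite !natr_absz !gtr0_norm ?denq_gt0 // numqE mulrC.
Qed.

Lemma inL (T : eqType) (x : T) s : x \in s -> List.In x s.
Proof. elim: s => // y s IH; rewrite in_cons => /orP [/eqP ->|h]; [by left|by right; apply: IH]. Qed.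

Section Part1.
Variables (K : fieldType) (val : K -> int) (n : nat) (r : 'rV[rat]_n) (le : rel 'X_{1..n}).
Hypothesis hle : monomial_order le.

Definition vec (t1 t2 : term K n) : nat -> rat := fun i =>
  if (i < n)%N then (co t1.2 i)%:R - (co t2.2 i)%:R else gval val r t2 - gval val r t1.
Definition en : nat -> rat := fun i => if (i < n)%N then 0 else 1.
Definition Dof (T : seq (term K n)) : seq (nat -> rat) :=
  en :: List.flat_map (fun t1 => List.map (vec t1) (List.filter (fun t2 => term_lt val r le t2 t1) T)) T.

Definition Pinv (x : nat -> rat) : Prop :=
  0 < x n \/ (x n = 0 /\ exists (N : nat) a b, [/\ (0 < N)%N, mlt le a b &
      forall i, (i < n)%N -> N%:R * x i = (co b i)%:R - (co a i)%:R]).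

Lemma Pinv_ge0 x : Pinv x -> 0 <= x n.
Proof. by case=> [/ltW|[->]]. Qed.

Lemma cone_Pinv T z : cone (Dof T) z -> Pinv z.
Proof.
elim => [d c hd c0|x y cx Px cy Py].
  case: hd => [<-|]; first by left; rewrite /en ltnn mulr1.
  move/List.in_flat_map => [t1 [_ /List.in_map_iff [t2 [<- /List.filter_In [_ htl]]]]].
  rewrite /Pinv /vec /= ltnn.
  move: htl; rewrite /term_lt => /orP [hg|/andP [/eqP hg hm]].
    by left; apply: mulr_gt0 => //; rewrite subr_gt0.
  right; split; first by rewrite hg subrr mulr0.
  have [N [k [N0 k0 hNk]]] := posq c0.
  exists N, (t2.2 *+ k)%MM, (t1.2 *+ k)%MM; split => //.
    exact: mlt_muln.
  move=> i hi; rewrite /= hi mulrA hNk !coM !natrM; ring.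
have gx := Pinv_ge0 Px; have gy := Pinv_ge0 Py.
case: Px => [px|[x0 [N1 [a1 [b1 [N10 m1 h1]]]]]].
  by left => /=; rewrite -(addr0 0); apply: ltr_leD.
case: Py => [py|[y0 [N2 [a2 [b2 [N20 m2 h2]]]]]].
  by left => /=; rewrite x0 add0r.
right; split; first by rewrite /= x0 y0 addr0.
exists (N1 * N2)%N, (a1 *+ N2 + a2 *+ N1)%MM, (b1 *+ N2 + b2 *+ N1)%MM; split.
- by rewrite muln_gt0 N10.
- by apply: mlt_sum => //; apply: mlt_muln.
move=> i hi /=; rewrite !coD !coM !natrD !natrM.
transitivity (N2%:R * (N1%:R * x i) + N1%:R * (N2%:R * y i)); first by ring.
rewrite h1 // h2 //; ring.
Qed.

Lemma cone_nz T x : cone (Dof T) x -> ~ (forall i, (i < n.+1)%N -> x i = 0).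
Proof.
move=> /cone_Pinv [px|[_ [N [a [b [N0 [/andP [_ nab]] h]]]]]] hz.
  by rewrite hz // ltxx in px.
suff eab : a = b by rewrite eab eqxx in nab.
apply: co_ext => i hi; have := h i hi; rewrite hz ?(ltn_trans hi) // mulr0.
by move/eqP; rewrite eq_sym subr_eq0 eqr_nat => /eqP.
Qed.

End Part1.

Lemma not_lt_both (K : fieldType) (val : K -> int) (n : nat) (s : 'rV[rat]_n) (le : rel 'X_{1..n})
  (hle : monomial_order le) (t1 t2 : term K n) :
  ~~ term_lt val s le t1 t2 -> ~~ term_lt val s le t2 t1 ->
  gval val s t1 = gval val s t2 /\ t1.2 = t2.2.
Proof.
case: hle => [[lr la lt lto] _].
rewrite /term_lt; case: (ltgtP (gval val s t1) (gval val s t2)) => //= e.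
case: (eqVneq t1.2 t2.2) => [-> //|ne]; rewrite /= !andbT.
by case/orP: (lto t1.2 t2.2) => ->.
Qed.

Section Part1b.
Variables (K : fieldType) (val : K -> int) (n : nat) (r : 'rV[rat]_n) (le : rel 'X_{1..n}).
Hypothesis hle : monomial_order le.

Lemma part1 (T : seq (term K n)) : exists s : 'rV[rat]_n, forall t1 t2, t1 \in T -> t2 \in T ->
  (term_lt val r le t2 t1 <-> gval val s t1 < gval val s t2).
Proof.
have [w Hw] := @FM n.+1 (Dof val r le T) (@cone_nz K val n r le hle T).
set lam := w n.
have lam0 : 0 < lam.
  have := Hw (en n) (or_introl erefl).
  rewrite /dotm big_ord_recr /= big1 ?add0r /en ?ltnn ?mulr1 // => i _.
  by rewrite ltn_ord mulr0.
pose W (a : 'X_{1..n}) := \sum_(i < n) w i * (co a i)%:R.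
have hdot : forall t1 t2, dotm n.+1 w (vec val r t1 t2) = W t1.2 - W t2.2 + lam * (gval val r t2 - gval val r t1).
  move=> t1 t2; rewrite /dotm big_ord_recr /= /vec ltnn; congr (_ + _).
  rewrite /W -sumrB; apply: eq_bigr => i _; by rewrite ltn_ord mulrBr.
pose s := \row_(i < n) (r 0 i + w i / lam).
have hg : forall t, gval val s t = gval val r t - W t.2 / lam.
  move=> t; rewrite /gval /sdot.
  under eq_bigr do rewrite mxE mulrDl.
  rewrite big_split /= opprD addrA; congr (_ - _).
  rewrite /W mulr_suml; apply: eq_bigr => i _; by rewrite co_ord mulrAC.
have key : forall t1 t2, gval val s t2 - gval val s t1 = dotm n.+1 w (vec val r t1 t2) / lam.
  move=> t1 t2; rewrite hdot !hg; field; by rewrite gt_eqF.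
have fwd : forall t1 t2, t1 \in T -> t2 \in T -> term_lt val r le t2 t1 -> gval val s t1 < gval val s t2.
  move=> t1 t2 h1 h2 htl; rewrite -subr_gt0 key; apply: divr_gt0 => //; apply: Hw.
  right; apply/List.in_flat_map; exists t1; split; first exact: inL.
  apply/List.in_map_iff; exists t2; split => //; apply/List.filter_In; split => //.
  exact: inL.
exists s => t1 t2 h1 h2; split; first exact: fwd.
move=> hs; case E: (term_lt val r le t2 t1) => //; exfalso.
case E2: (term_lt val r le t1 t2).
  by have := fwd _ _ h2 h1 E2; rewrite ltNge (ltW hs).
have [e1 e2] := not_lt_both hle (negbT E2) (negbT E).
by move: hs; rewrite !hg e1 e2 ltxx.
Qed.

End Part1b.

Definition step (A : Type) (lt : A -> A -> bool) (m : A) (acc : option A) : option A :=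
  match acc with None => Some m | Some m' => if lt m' m then Some m else Some m' end.

Lemma foldr_step_eq (A : eqType) (lt1 lt2 : A -> A -> bool) (l : seq A) :
  {in l &, forall a b, lt1 a b = lt2 a b} ->
  foldr (step lt1) None l = foldr (step lt2) None l /\
  (forall m, foldr (step lt1) None l = Some m -> m \in l).
Proof.
elim: l => [|x l IH] H; first by split.
have [e1 e2] : foldr (step lt1) None l = foldr (step lt2) None l /\
  (forall m, foldr (step lt1) None l = Some m -> m \in l).
  by apply: IH => a b ha hb; apply: H; rewrite in_cons ?ha ?hb orbT.
rewrite /= -e1; case E: (foldr (step lt1) None l) => [m'|] /=; last first.
  by split => // m [<-]; rewrite in_cons eqxx.
have hm' := e2 _ E.
split; first by rewrite H // in_cons ?hm' ?eqxx ?orbT.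
by move=> m; case: ifP => _ [<-]; rewrite in_cons ?eqxx ?hm' ?orbT.
Qed.

Lemma foldr_step_min (A : eqType) (lt : A -> A -> bool) (g : A -> rat) :
  (forall a b, lt a b -> g b <= g a) -> (forall a b, ~~ lt a b -> g a <= g b) ->
  forall l, l != [::] -> exists m0, [/\ foldr (step lt) None l = Some m0, m0 \in l &
    forall m, m \in l -> g m0 <= g m].
Proof.
move=> h1 h2; elim => // x l IH _.
case: l IH => [|y l] IH.
  by exists x; split => //; [rewrite mem_seq1|move=> m; rewrite mem_seq1 => /eqP ->].
have [m0 [e i0 h0]] := IH isT.
have -> : foldr (step lt) None [:: x, y & l] = step lt x (foldr (step lt) None (y :: l)) by [].
rewrite e /=; case: ifP => h.
  exists x; split => //; first by rewrite in_cons eqxx.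
  move=> m; rewrite in_cons => /orP [/eqP ->//|hm].
  exact: le_trans (h1 _ _ h) (h0 _ hm).
exists m0; split => //; first by rewrite in_cons i0 orbT.
move=> m; rewrite in_cons => /orP [/eqP ->|hm]; last exact: h0.
exact: h2 (negbT h).
Qed.

Theorem mainTheorem2 (K : fieldType) (val : K -> int)
  (hval : is_discrete_valuation val) (hcomplete : vcomplete val)
  (n : nat) (r : 'rV[rat]_n) (le : rel 'X_{1..n}) (hle : monomial_order le) :
  (forall T : seq (term K n), all (@is_term K n) T ->
     exists s : 'rV[rat]_n, forall t1 t2, t1 \in T -> t2 \in T ->
       (term_lt val r le t2 t1 <-> gval val s t1 < gval val s t2))
  /\
  (forall F : seq {mpoly K[n]},
     exists s : 'rV[rat]_n,
       equiv_wrt (LT val r le) (LT val s le) F /\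
       (forall f, f \in F -> LT val s le f = init val s f)).
Proof.
split; first by move=> T _; exact: (part1 val r hle T).
move=> F.
pose T := [seq ((f : {mpoly K[n]})@_m, m) | f <- F, m <- msupp f].
have [s H] := part1 val r hle T.
have inT : forall f m, f \in F -> m \in msupp f -> (f@_m, m) \in T.
  by move=> f m hf hm; apply: (allpairs_f_dep (fun f m => ((f : {mpoly K[n]})@_m, m)) hf hm).
have transfer : forall t1 t2, t1 \in T -> t2 \in T -> term_lt val s le t2 t1 = term_lt val r le t2 t1.
  move=> t1 t2 h1 h2; have H12 := H t1 t2 h1 h2; have H21 := H t2 t1 h2 h1.
  rewrite {1}/term_lt; case: (ltgtP (gval val s t1) (gval val s t2)) => e /=.
  - by apply/esym/H12.
  - apply/esym/negbTE/negP => /H12; by rewrite ltNge (ltW e).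
  have E1 : ~~ term_lt val r le t2 t1 by apply/negP => /H12; rewrite e ltxx.
  have E2 : ~~ term_lt val r le t1 t2 by apply/negP => /H21; rewrite e ltxx.
  have [_ e2] := not_lt_both hle E2 E1.
  by rewrite (negbTE E1) e2 eqxx andbF.
have LTexpE : forall s' f, LT_exp val s' le f =
    foldr (step (fun a b => term_lt val s' le (f@_a, a) (f@_b, b))) None (msupp f) by [].
have LTeq : forall f, f \in F -> LT val s le f = LT val r le f.
  move=> f hf; rewrite /LT !LTexpE.
  have [-> _] := foldr_step_eq (lt1 := fun a b => term_lt val s le (f@_a, a) (f@_b, b))
     (lt2 := fun a b => term_lt val r le (f@_a, a) (f@_b, b)) (l := msupp f)
     (fun a b ha hb => transfer _ _ (inT f b hf hb) (inT f a hf ha)).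
  by [].
exists s; split; first rewrite /equiv_wrt.
  have -> : [seq LT val s le f | f <- F] = [seq LT val r le f | f <- F].
    by apply/eq_in_map => f hf; apply: LTeq.
  by [].
move=> f hf.
rewrite /LT LTexpE /init.
case: (eqVneq (msupp f) [::]) => [->|ne]; first by rewrite big_nil.
pose g m := gval val s (f@_m, m).
have hA : forall a b, term_lt val s le (f@_a, a) (f@_b, b) -> g b <= g a.
  move=> a b; rewrite /term_lt => /orP [/ltW //|/andP [/eqP ea _]]; by rewrite /g ea.
have hB : forall a b, ~~ term_lt val s le (f@_a, a) (f@_b, b) -> g a <= g b.
  by move=> a b; rewrite /term_lt negb_or => /andP [h _]; rewrite leNgt.
have [m0 [e i0 h0]] := @foldr_step_min _ (fun a b => term_lt val s le (f@_a, a) (f@_b, b)) g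
   hA hB (msupp f) ne.
rewrite e (big_rem m0) //=.
  have -> : all (fun m' => gval val s (f@_m0, m0) <= gval val s (f@_m', m')) (msupp f).
    by apply/allP => m hm; apply: h0.
  rewrite big1_seq ?addr0 // => m /andP [/allP hP hm].
  exfalso.
  have hm' : m \in msupp f by move: hm; rewrite (mem_rem_uniq _ (msupp_uniq f)) => /andP [].
  have nm : m != m0 by move: hm; rewrite (mem_rem_uniq _ (msupp_uniq f)) => /andP [].
  have eg : g m = g m0 by apply/eqP; rewrite eq_le hP // h0.
  have E1 : ~~ term_lt val r le (f@_m, m) (f@_m0, m0).
    by apply/negP => /(H _ _ (inT f m0 hf i0) (inT f m hf hm')); rewrite -/(g m) -/(g m0) eg ltxx.
  have E2 : ~~ term_lt val r le (f@_m0, m0) (f@_m, m).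
    by apply/negP => /(H _ _ (inT f m hf hm') (inT f m0 hf i0)); rewrite -/(g m) -/(g m0) eg ltxx.
  have [_ /= emm] := not_lt_both hle E1 E2.
  by rewrite emm eqxx in nm.
Qed.
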